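(* Fix $n\in\mathbb{Z}_+$ and $a_1,\ldots,a_{n+1}\in(0,\infty)$. Then there is a constant $c>0$ (depending on $a_1,\ldots,a_{n+1}$) and an unbounded open set $B$ of positive real numbers with the following property: for each $\beta\in B$ there are $p_1,\ldots,p_n\in\mathbb{Z}$ such that, for each $j\in\{1,\ldots,n\}$, \[0<p_j\frac{a_j}{a_{n+1}}-\beta<\begin{cases}c\beta^{-2}&\text{if }n=1,\\ c\beta^{-1/(n-1)}&\text{if }n\geq2.\end{cases}\] *)

(* Defs.v *)
From HB Require Import structures.
From mathcomp Require Import all_boot all_order all_algebra.
From mathcomp Require Import boolp classical_sets reals topology normedtype exp.
Set Implicit Arguments. Unset Strict Implicit. Unset Printing Implicit Defensive.
Import Order.TTheory GRing.Theory Num.Theory.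
Local Open Scope ring_scope.

Definition lemma5p5_bound (R : realType) (n : nat) (c b : R) : R :=
  if n == 1%N then c * b ^- 2
  else c * (b `^ (- (1 / (n.-1)%:R))).

(* Main.v *)
Require Import Defs.
From HB Require Import structures.
From mathcomp Require Import all_boot all_order all_algebra.
From mathcomp Require Import boolp classical_sets reals topology normedtype exp.
From mathcomp Require Import zify ring lra.
Import Order.TTheory GRing.Theory Num.Theory numFieldNormedType.Exports.
Local Open Scope classical_set_scope.
Local Open Scope ring_scope.
Set Warnings "-notation-overridden,-ambiguous-paths,-deprecated".
Set Implicit Arguments. Unset Strict Implicit.

Definition fr (R : realType) (x : R) : R := x - (Num.floor x)%:~R.

Lemma fr_ge0 (R : realType) (x : R) : 0 <= fr x.
Proof. rewrite /fr subr_ge0; exact: floor_le. Qed.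
Lemma fr_lt1 (R : realType) (x : R) : fr x < 1.
Proof. rewrite /fr ltrBlDr; have := floorD1_gt x; by rewrite intrD addrC. Qed.

Lemma box_close (R : realType) (N' : nat) (x y : R) :
  (inord (absz (Num.floor (N'.+1%:R * fr x))) : 'I_N'.+1) =
  inord (absz (Num.floor (N'.+1%:R * fr y))) ->
  `|fr x - fr y| < N'.+1%:R^-1.
Proof.
set u := N'.+1%:R * fr x; set v := N'.+1%:R * fr y.
have Nge : (0 : R) < N'.+1%:R by rewrite ltr0n.
have bnd : forall w : R, 0 <= w < N'.+1%:R -> (absz (Num.floor w) < N'.+1)%N /\ 0 <= Num.floor w.
  move=> w /andP[w0 w1].
  have f0 : 0 <= Num.floor w by rewrite floor_ge0.
  have : ((Num.floor w)%:~R : R) < (N'.+1)%:~R by apply: le_lt_trans (floor_le _) w1.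
  rewrite ltr_int => h; split=> //; lia.
have rng : forall z : R, 0 <= N'.+1%:R * fr z < N'.+1%:R.
  move=> z; rewrite mulr_ge0 ?fr_ge0 ?ltW //=.
  by rewrite -[X in _ < X](mulr1 N'.+1%:R) ltr_pM2l // fr_lt1.
have [bu u0] := bnd u (rng x).
have [bv v0] := bnd v (rng y).
move/(congr1 (@nat_of_ord _)); rewrite !inordK // => habs.
have hz : Num.floor u = Num.floor v by lia.
have h1 := floor_le u; have h2 := floorD1_gt u; have h3 := floor_le v; have h4 := floorD1_gt v.
rewrite hz intrD in h1 h2; rewrite intrD in h4.
have : `|u - v| < 1 by rewrite ltr_norml; apply/andP; split; lra.
rewrite /u /v -mulrBr normrM ger0_norm ?ltW // => h.
by rewrite -[X in _ < X]mul1r ltr_pdivlMr // mulrC.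
Qed.

Lemma dirichlet (R : realType) (m N' : nat) (th : 'I_m -> R) :
  exists q : nat, (0 < q <= N'.+1 ^ m)%N /\
  exists s : 'I_m -> int, forall j, `|q%:R * th j - (s j)%:~R| < N'.+1%:R^-1.
Proof.
pose f := fun k : 'I_(N'.+1 ^ m).+1 => ([ffun j =>
  (inord (absz (Num.floor (N'.+1%:R * fr (k%:R * th j)))) : 'I_N'.+1)] : {ffun 'I_m -> 'I_N'.+1}).
have ninj : ~ injective f.
  move=> inj; have := leq_card f inj; rewrite card_ffun !card_ord; lia.
have [[k1 [k2 [e ne]]] | H] := pselect (exists k1 k2, f k1 = f k2 /\ k1 != k2); last first.
  exfalso; apply: ninj => x y exy; apply/eqP; apply/negPn/negP => nxy; apply: H.
  by exists x, y.
wlog lt12 : k1 k2 e ne / (k1 < k2)%N.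
  move=> hw; case: (ltngtP k1 k2) => h.
  - exact: hw e ne h.
  - by apply: (hw k2 k1) => //; rewrite eq_sym.
  - by move: ne; rewrite (ord_inj h) eqxx.
exists (k2 - k1)%N; split.
  have := ltn_ord k2; lia.
exists (fun j => Num.floor (k2%:R * th j) - Num.floor (k1%:R * th j)) => j.
have ej := congr1 (fun g : {ffun 'I_m -> 'I_N'.+1} => g j) e.
rewrite !ffunE in ej.
set x1 := k1%:R * th j; set x2 := k2%:R * th j.
have -> : (k2 - k1)%:R * th j - (Num.floor x2 - Num.floor x1)%:~R = fr x2 - fr x1.
  rewrite /fr (natrB _ (ltnW lt12)) mulrBl intrB -/x1 -/x2.
  set a1 := (Num.floor x1)%:~R; set a2 := (Num.floor x2)%:~R.
  ring.
by rewrite distrC; exact: box_close ej.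
Qed.

Lemma archi_nat (R : realType) (x : R) : exists k : nat, x < k%:R.
Proof.
exists (absz (Num.ceil x)).+1.
rewrite -addn1 natrD natr_absz intr_norm.
apply: (le_lt_trans (ceil_ge x)); apply: (le_lt_trans (ler_norm _)).
by rewrite ltrDl ltr01.
Qed.

Lemma sum_ge_each (R : realType) (T : finType) (g : T -> R) :
  (forall t, 0 <= g t) -> forall t, g t <= \sum_i g i.
Proof.
move=> h t; rewrite (bigD1 t) //= lerDl; apply: sumr_ge0 => i _; exact: h.
Qed.

Lemma pos_min (R : realType) (T : finType) (g : T -> R) :
  (forall t, 0 < g t) -> exists e, 0 < e /\ forall t, e <= g t.
Proof.
move=> h; have s0 : 0 <= \sum_i (g i)^-1 by apply: sumr_ge0 => i _; rewrite invr_ge0 ltW.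
exists (1 + \sum_i (g i)^-1)^-1; split; first by rewrite invr_gt0 ltr_wpDr.
move=> t; rewrite -lef_pV2 ?posrE ?invr_gt0 ?ltr_wpDr // invrK.
have hs := @sum_ge_each R T (fun i => (g i)^-1) (fun i => ltW (eq_ind_r is_true (h i) (invr_gt0 (g i)))) t.
apply: le_trans hs _; by rewrite lerDr.
Qed.

Lemma lattice_dist (R : realType) (x r : R) : 0 < r ->
  (forall t : int, t%:~R * r != x) ->
  exists d, 0 < d /\ forall t : int, d <= `|x - t%:~R * r|.
Proof.
move=> r0 hne.
set y := x / r; set z := Num.floor y; set f := y - z%:~R.
have xe : x = y * r by rewrite /y mulfVK ?gt_eqF.
have f0 : 0 <= f by rewrite /f subr_ge0 floor_le.
have f1 : f < 1 by rewrite /f ltrBlDr; have := floorD1_gt y; rewrite intrD addrC.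
have fn0 : f != 0.
  apply/negP => /eqP fz; move: (hne z); rewrite xe.
  by move: fz; rewrite /f => /eqP; rewrite subr_eq0 => /eqP ->; rewrite eqxx.
have fp : 0 < f by rewrite lt_neqAle eq_sym fn0 f0.
exists (r * Num.min f (1 - f)); split.
  by rewrite mulr_gt0 // lt_min fp subr_gt0 f1.
move=> t; rewrite xe -mulrBl normrM (gtr0_norm r0) [X in _ <= X]mulrC ler_pM2l //.
have [tz|zt] := lerP t z.
  rewrite ger0_norm; last first.
    by rewrite subr_ge0; apply: le_trans (floor_le y); rewrite ler_int.
  by rewrite ge_min; apply/orP; left; rewrite /f lerB // ler_int.
rewrite ler0_norm; last first.
  rewrite subr_le0; apply/ltW/(lt_le_trans (floorD1_gt y)); rewrite ler_int.
  by rewrite -/z lezD1.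
rewrite ge_min; apply/orP; right.
have : (z + 1 <= t)%R by rewrite lezD1.
rewrite -(ler_int R) intrD => h; rewrite /f; lra.
Qed.

Lemma caseB (R : realType) (n : nat) (r : 'I_n -> R) (r0 : R) :
  (forall j, 0 < r j) ->
  (forall q : nat, (0 < q)%N -> exists j, forall t : int, t%:~R * r j != q%:R * r0) ->
  forall Q : nat, exists d, 0 < d /\ forall q : nat, (0 < q <= Q)%N ->
    exists j, forall t : int, d <= `|q%:R * r0 - t%:~R * r j|.
Proof.
move=> hr hq; elim=> [|Q [d [d0 hd]]].
  by exists 1; split => // q; case: q.
have [j hj] := hq Q.+1 isT.
have [d' [d'0 hd']] := lattice_dist (hr j) hj.
exists (Num.min d d'); split; first by rewrite lt_min d0 d'0.
move=> q /andP[q0]; rewrite leq_eqVlt => /orP[/eqP ->|qQ].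
  by exists j => t; rewrite ge_min (hd' t) orbT.
have [j' hj'] := hd q ltac:(by rewrite q0).
by exists j' => t; rewrite ge_min (hj' t).
Qed.

Lemma assemble (R : realType) (n : nat) (r : 'I_n -> R) (f : R -> R)
 (fanti : forall b b', 0 < b -> b <= b' -> f b' <= f b)
 (core : forall M, exists p : 'I_n -> int, exists b0, M < b0 /\
    forall j, b0 <= (p j)%:~R * r j /\ (p j)%:~R * r j - b0 < f b0) :
 exists B : set R, open B /\ B `<=` [set x | 0 < x] /\
   (forall M, exists2 b, B b & M < b) /\
   forall b, B b -> exists p : 'I_n -> int, forall j, 0 < (p j)%:~R * r j - b < f b.
Proof.
pose G := [set i : ('I_n -> int) * R * R | 0 < i.2 /\ i.2 <= i.1.2 /\
  forall j, i.1.2 <= (i.1.1 j)%:~R * r j /\ (i.1.1 j)%:~R * r j - i.1.2 + i.2 <= f i.1.2].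
exists (\bigcup_(i in G) [set` `](i.1.2 - i.2), i.1.2[]).
split; first by apply: bigcup_open => i _; exact: interval_open.
split.
  move=> b [i [h0 [h1 _]]] /=; rewrite in_itv /= => /andP[lb ub]; lra.
split.
  move=> M; have [p [b0 [Mb hp]]] := core `|M|.
  have [e [e0 he]] := @pos_min R _ (fun j => f b0 - ((p j)%:~R * r j - b0))
     (fun j => eq_ind_r is_true (proj2 (hp j)) (subr_gt0 _ _)).
  set η := Num.min (b0 - `|M|) e.
  have η1 : η <= b0 - `|M| by rewrite /η ge_min lexx.
  have η2 : η <= e by rewrite /η ge_min lexx orbT.
  have η0 : 0 < η by rewrite /η lt_min e0 subr_gt0 Mb.
  have nM := ler_norm M; have n0 := normr_ge0 M.
  exists (b0 - η / 2); last by lra.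
  exists (p, b0, η).
    split => //=; split; first by lra.
    move=> j; split; first exact: (proj1 (hp j)).
    have := he j; lra.
  by rewrite /= in_itv /=; apply/andP; split; lra.
move=> b [[[p b0] η] [/= h0 [/= h1 /= hj]]]; rewrite /= in_itv /= => /andP[lb ub].
exists p => j; have [hj1 hj2] := hj j.
have := fanti b b0 ltac:(lra) (ltW ub).
move=> hf; apply/andP; split; lra.
Qed.

Lemma core1 (R : realType) (r : 'I_1 -> R) (hr : forall j, 0 < r j) (c : R) (c0 : 0 < c) :
  forall M, exists p : 'I_1 -> int, exists b0, M < b0 /\
    forall j, b0 <= (p j)%:~R * r j /\ (p j)%:~R * r j - b0 < c * b0 ^- 2.
Proof.
move=> M; have hr0 := hr ord0; set r0 := r ord0.
have [k hk] := archi_nat (`|M| / r0).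
exists (fun _ => k%:Z), ((k%:Z)%:~R * r ord0); split.
  rewrite -pmulrn; apply: le_lt_trans (ler_norm M) _.
  by rewrite -ltr_pdivrMr.
move=> j; rewrite (ord1 j) subrr lexx; split => //.
have b0 : 0 < (k%:Z)%:~R * r ord0.
  rewrite -pmulrn; apply: mulr_gt0 => //; apply: le_lt_trans hk; by rewrite divr_ge0 // ltW.
apply: mulr_gt0 => //; by rewrite invr_gt0 exprn_gt0.
Qed.

Lemma coreN (R : realType) (m : nat) (r : 'I_m.+2 -> R) (hr : forall j, 0 < r j) :
  exists c, 0 < c /\ forall M, exists p : 'I_m.+2 -> int, exists b0, M < b0 /\
    forall j, b0 <= (p j)%:~R * r j /\
      (p j)%:~R * r j - b0 < c * b0 `^ (- (1 / m.+1%:R)).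
Proof.
have hr0 := hr ord0; set r0 := r ord0.
set Rmax := \sum_j r j.
have hRj : forall j, r j <= Rmax by apply: sum_ge_each => j; exact: ltW.
have Rm0 : 0 < Rmax by apply: lt_le_trans (hRj ord0).
set C := r0 + 1.
exists (2 * Rmax * C + 1); split.
  apply: ltr_wpDl; last exact: ltr01.
  by rewrite !mulr_ge0 // ltW // ltr_wpDl // ltW.
move=> M.
have nM := ler_norm M; have n0 := normr_ge0 M.
case: (pselect (exists q : nat, (0 < q)%N /\
   exists s : 'I_m.+2 -> int, forall j, (s j)%:~R * r j = q%:R * r0)).
  move=> [q [q0 [s hs]]].
  have [k hk] := archi_nat (`|M| / r0).
  have kr : `|M| < k%:R * r0 by rewrite -ltr_pdivrMr.
  have b0p : 0 < (k * q)%:R * r0.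
    apply: mulr_gt0 => //; rewrite ltr0n muln_gt0 q0 andbT -(ltr0n R).
    apply: le_lt_trans hk; by rewrite divr_ge0 // ltW.
  exists (fun j => k%:Z * s j), ((k * q)%:R * r0); split.
    apply: le_lt_trans nM _; apply: lt_le_trans kr _.
    rewrite ler_pM2r // ler_nat; by rewrite leq_pmulr.
  move=> j; rewrite intrM -pmulrn -mulrA hs mulrA -natrM subrr lexx; split => //.
  by apply: mulr_gt0; rewrite ?powR_gt0 // ltr_wpDl // ?ltr01 !mulr_ge0 // ltW // ltr_wpDl // ltW.
move=> nA.
have hq : forall q : nat, (0 < q)%N -> exists j, forall t : int, t%:~R * r j != q%:R * r0.
  move=> q q0; case: (pselect (exists j, forall t : int, t%:~R * r j != q%:R * r0)) => // H.
  exfalso; apply: nA; exists q; split => //.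
  apply: (@fin_all_exists _ (fun _ => int) (fun j t => t%:~R * r j = q%:R * r0)) => j.
  case: (pselect (exists t : int, t%:~R * r j = q%:R * r0)) => // H2.
  exfalso; apply: H; exists j => t; apply/eqP => e; apply: H2; by exists t.
have [Q0 hQ0] := archi_nat ((`|M| + Rmax) / r0).
have Q0r : `|M| + Rmax < Q0%:R * r0 by rewrite -ltr_pdivrMr.
have [d [d0 hd]] := caseB hr hq Q0.
have [N' hN'] := archi_nat (Rmax / d).
set N : R := N'.+1%:R.
have N1 : 1 <= N by rewrite /N ler1n.
have N0 : 0 < N by lra.
have RNd : Rmax / N < d.
  rewrite ltr_pdivrMr //; move: hN'; rewrite ltr_pdivrMr // => h.
  apply: (lt_le_trans h); rewrite [d * N]mulrC ler_pM2r // /N ler_nat; exact: leqnSn.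
have RNR : Rmax / N <= Rmax by rewrite ler_pdivrMr // ler_peMr // ltW.
have RN0 : 0 < Rmax / N by rewrite divr_gt0.
pose th := fun k : 'I_m.+1 => r0 / r (lift ord0 k).
have [q [/andP[q0 qN] [s hs]]] := dirichlet N' th.
pose p := fun j : 'I_m.+2 => match unlift ord0 j with None => q%:Z | Some k => s k end.
have close : forall j, `|q%:R * r0 - (p j)%:~R * r j| < Rmax / N.
  move=> j; case: (unliftP ord0 j) => [k ->|->]; rewrite /p ?liftK ?unlift_none /=.
    have e : q%:R * r0 - (s k)%:~R * r (lift ord0 k) =
       r (lift ord0 k) * (q%:R * th k - (s k)%:~R).
      rewrite /th; field; by rewrite gt_eqF.
    rewrite e normrM gtr0_norm //.
    apply: (lt_le_trans (y := r (lift ord0 k) / N)).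
      by rewrite ltr_pM2l // -[N^-1]/(N'.+1%:R^-1) hs.
    by rewrite ler_pM2r ?invr_gt0.
  by rewrite -pmulrn subrr normr0.
have qQ : (Q0 < q)%N.
  rewrite ltnNge; apply/negP => qle.
  have [j hj] := hd q ltac:(by rewrite q0 qle).
  have h1 := hj (p j); have h2 := close j.
  by have := le_lt_trans h1 (lt_trans h2 RNd); rewrite ltxx.
set b0 := q%:R * r0 - Rmax / N.
have qr : Q0%:R * r0 < q%:R * r0 by rewrite ltr_pM2r // ltr_nat.
have Mb : `|M| < b0.
  rewrite /b0; move: Q0r qr RNR; generalize (Rmax / N) (q%:R * r0) (Q0%:R * r0) => x y z; lra.
have b0p : 0 < b0 by lra.
exists p, b0; split; first by lra.
move=> j; have := close j; rewrite ltr_norml => /andP[c1 c2].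
have key : 2 * Rmax / N <= (2 * Rmax * C + 1) * b0 `^ (- (1 / m.+1%:R)).
  have C1 : 1 <= C by rewrite /C lerDr ltW.
  have C0 : 0 < C by lra.
  set e := 1 / m.+1%:R.
  set y := b0 `^ e.
  have y0 : 0 < y by apply: powR_gt0.
  have yM : y ^+ m.+1 = b0.
    rewrite /y -powR_mulrn ?ltW // -powRrM /e mul1r mulVf ?pnatr_eq0 //.
    by rewrite powRr1 // ltW.
  have bb : b0 <= (N * C) ^+ m.+1.
    have h1 : b0 <= q%:R * r0 by rewrite /b0 lerBlDr lerDl ltW.
    apply: (le_trans h1); rewrite exprMn.
    apply: ler_pM; [exact: ler0n | exact: ltW | by rewrite /N -natrX ler_nat | ].
    apply: (le_trans _ (@ler_eXnr _ C m.+1 (ltn0Sn m) C1)); by rewrite /C lerDl ler01.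
  have yNC : y <= N * C.
    rewrite -(@ler_pXn2r _ m.+1 (ltn0Sn m) y (N * C)) ?yM //.
    by rewrite nnegrE; apply: ltW.
    by rewrite nnegrE; apply: ltW; apply: mulr_gt0.
  rewrite powRN -/y.
  have NC0 : 0 < N * C by rewrite mulr_gt0.
  apply: (le_trans (y := (2 * Rmax * C + 1) * (N * C)^-1)).
    rewrite ler_pdivlMr //.
    have -> : 2 * Rmax / N * (N * C) = 2 * Rmax * C.
      field; by rewrite gt_eqF // ltr_wpDr ?ler0n ?ltr01.
    by rewrite lerDl ler01.
  rewrite ler_pM2l; last by rewrite ltr_wpDl ?ltr01 // !mulr_ge0 // ltW.
  by rewrite lef_pV2 ?posrE.
move: key; set W := (2 * Rmax * C + 1) * b0 `^ (- (1 / m.+1%:R)); clearbody W => key.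
move: key c1 c2; rewrite /b0 -[2 * Rmax / N]mulrA.
generalize (Rmax / N) (q%:R * r0) ((p j)%:~R * r j) => x y z.
move=> k1 k2 k3; split; lra.
Qed.

Theorem lemma5p5 (R : realType) (n : nat) (hn : (0 < n)%N)
  (a : 'I_n.+1 -> R) (ha : forall i, 0 < a i) :
  exists c : R, 0 < c /\
  exists B : set R,
    open B /\ B `<=` [set x | 0 < x] /\
    (forall M : R, exists2 b, B b & M < b) /\
    forall b, B b ->
      exists p : 'I_n -> int, forall j : 'I_n,
        0 < (p j)%:~R * (a (widen_ord (leqnSn n) j) / a ord_max) - b
          < lemma5p5_bound n c b.
Proof.
case: n hn a ha => [//|[|m]] _ a ha.
- pose r := fun j : 'I_1 => a (widen_ord (leqnSn 1) j) / a ord_max.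
  have hr : forall j, 0 < r j by move=> j; rewrite divr_gt0.
  exists 1; split; first exact: ltr01.
  have fanti : forall b b' : R, 0 < b -> b <= b' -> 1 * b' ^- 2 <= 1 * b ^- 2.
    move=> b b' hb hbb'; have b'0 : 0 < b' := lt_le_trans hb hbb'.
    rewrite !mul1r lef_pV2 ?posrE ?exprn_gt0 //.
    by rewrite ler_pXn2r // nnegrE; apply: ltW.
  have [B [oB [pB [uB hB]]]] := assemble fanti (core1 hr ltr01).
  exists B; split => //; split => //; split => //.
- pose r := fun j : 'I_m.+2 => a (widen_ord (leqnSn m.+2) j) / a ord_max.
  have hr : forall j, 0 < r j by move=> j; rewrite divr_gt0.
  have [c [c0 hc]] := coreN hr.
  exists c; split => //.
  have fanti : forall b b' : R, 0 < b -> b <= b' ->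
      c * b' `^ (- (1 / m.+1%:R)) <= c * b `^ (- (1 / m.+1%:R)).
    move=> b b' hb hbb'; have b'0 : 0 < b' := lt_le_trans hb hbb'.
    rewrite ler_pM2l // !powRN lef_pV2 ?posrE ?powR_gt0 //.
    apply: ge0_ler_powR => //; rewrite ?nnegrE; last by apply: ltW.
    - by rewrite divr_ge0 ?ler01 ?ler0n.
    - by apply: ltW.
  have [B [oB [pB [uB hB]]]] := assemble fanti hc.
  exists B; split => //; split => //; split => //.
Qed.
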